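(* There is an absolute constant $c>0$ such that for all $\varepsilon,\delta\in(0,1)$ the following holds: any sublinear algorithm which, for every finite input multiset $A\subset\mathbb{R}^d$, outputs a $(1+\varepsilon)$-approximate mean of $A$ with probability at least $1-\delta$ must sample at least $c\,\varepsilon^{-1}\log\delta^{-1}$ points.
   Context: For a finite multiset $A\subset\mathbb{R}^d$ with $|A|=n$, let $\mathrm{Opt}=\min_{x\in\mathbb{R}^d}\sum_{p\in A}\|p-x\|^2$. A point $x$ is a $(1+\varepsilon)$-approximate mean of $A$ if $\sum_{p\in A}\|p-x\|^2\le(1+\varepsilon)\mathrm{Opt}$. A sublinear algorithm accesses the input $A$ only by drawing points independently and uniformly at random from $A$ (it may use internal randomness); its output depends only on the sampled points and its internal randomness. *)

(* Defs.v *)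
From HB Require Import structures.
From mathcomp Require Import all_boot all_order all_algebra.
From mathcomp Require Import all_classical all_reals all_analysis.
Set Implicit Arguments. Unset Strict Implicit. Unset Printing Implicit Defensive.
Import Order.TTheory GRing.Theory Num.Theory.
Local Open Scope ring_scope.
Local Open Scope classical_set_scope.

Section Defs.
Variable R : realType.

Definition sqnorm (d : nat) (x : 'rV[R]_d) : R := \sum_(i < d) (x ord0 i) ^+ 2.

(* A finite multiset of n points of R^d is a function 'I_n -> R^d. *)
Definition cost (d n : nat) (A : 'I_n -> 'rV[R]_d) (x : 'rV[R]_d) : R :=
  \sum_(j < n) sqnorm (A j - x).

Definition Opt (d n : nat) (A : 'I_n -> 'rV[R]_d) : R := inf (range (cost A)).

Definition approx_mean (eps : R) (d n : nat) (A : 'I_n -> 'rV[R]_d) (x : 'rV[R]_d) : Prop :=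
  cost A x <= (1 + eps) * Opt A.

(* A sublinear algorithm drawing m samples, with internal randomness omega
   from a probability space (Omega, P): its output depends only on omega and
   the sequence of m sampled points. *)
Definition success_event (m d n : nat) (Omega : Type)
  (alg : Omega -> ('I_m -> 'rV[R]_d) -> 'rV[R]_d) (eps : R)
  (A : 'I_n -> 'rV[R]_d) (s : {ffun 'I_m -> 'I_n}) : set Omega :=
  [set w | approx_mean eps A (alg w (fun k => A (s k)))].

(* Success probability when the m samples are i.i.d. uniform indices of A
   (independent of the internal randomness). *)
Definition success_prob (m d n : nat) (dO : measure_display) (Omega : measurableType dO)
  (P : probability Omega R) (alg : Omega -> ('I_m -> 'rV[R]_d) -> 'rV[R]_d) (eps : R)
  (A : 'I_n -> 'rV[R]_d) : R :=
  (n%:R ^+ m)^-1 * \sum_(s : {ffun 'I_m -> 'I_n}) fine (P (success_event alg eps A s)).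

End Defs.

(* Main.v *)
Require Import Defs.
From HB Require Import structures.
From mathcomp Require Import all_boot all_order all_algebra.
From mathcomp Require Import all_classical all_reals all_analysis.
From mathcomp Require Import ring lra.
Import Order.TTheory GRing.Theory Num.Theory.
Local Open Scope ring_scope.
Local Open Scope classical_set_scope.
Set Implicit Arguments. Unset Strict Implicit.

Definition e0 (R : realType) (d : nat) (i0 : 'I_d) : 'rV[R]_d := \row_i (i == i0)%:R.

Definition inst (R : realType) {d : nat} (k b : nat) (i0 : 'I_d) (t : R) : 'I_(k+b) -> 'rV[R]_d :=
  fun j => (if (j < k)%N then t else 0) *: e0 R i0.

Arguments inst {R d} k b i0 t _.
Arguments e0 R {d} i0.

Lemma sqnorm_e0 (R : realType) d (i0 : 'I_d) (c : R) : sqnorm (c *: e0 R i0) = c ^+ 2.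
Proof.
rewrite /sqnorm (bigD1 i0) //= big1 => [|i /negPf ne]; rewrite !mxE ?eqxx ?ne.
  by rewrite mulr1 addr0.
by rewrite mulr0 expr0n.
Qed.

Lemma sqnorm_ge (R : realType) d (i0 : 'I_d) (v : 'rV[R]_d) : (v ord0 i0) ^+ 2 <= sqnorm v.
Proof.
rewrite /sqnorm (bigD1 i0) //= lerDl sumr_ge0 // => i _; exact: sqr_ge0.
Qed.

Lemma sum_split (R : realType) (k b : nat) (t : R) (G : R -> R) :
  \sum_(j < k + b) G (if (j < k)%N then t else 0) = k%:R * G t + b%:R * G 0.
Proof.
rewrite big_split_ord /=.
rewrite (eq_bigr (fun _ => G t)); last by move=> i _; rewrite ltn_ord.
rewrite [X in _ + X](eq_bigr (fun _ => G 0)); last by move=> i _; rewrite ltnNge leq_addr.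
rewrite !sumr_const !card_ord.
by rewrite !mulr_natl.
Qed.

Lemma cost_lb (R : realType) d k b (i0 : 'I_d) (t : R) (x : 'rV[R]_d) :
  k%:R * (t - x ord0 i0) ^+ 2 + b%:R * (0 - x ord0 i0) ^+ 2 <= cost (inst k b i0 t) x.
Proof.
rewrite /cost -(sum_split k b t (fun a => (a - x ord0 i0) ^+ 2)).
apply: ler_sum => j _; apply: le_trans (sqnorm_ge i0 _).
by rewrite !mxE eqxx mulr1.
Qed.

Lemma cost_mu (R : realType) d k b (i0 : 'I_d) (t mu : R) :
  cost (inst k b i0 t) (mu *: e0 R i0) = k%:R * (t - mu) ^+ 2 + b%:R * (0 - mu) ^+ 2.
Proof.
rewrite /cost -(sum_split k b t (fun a => (a - mu) ^+ 2)).
by apply: eq_bigr => j _; rewrite /inst -scalerBl sqnorm_e0.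
Qed.

Lemma Opt_le (R : realType) d n (A : 'I_n -> 'rV[R]_d) x : Opt A <= cost A x.
Proof.
apply: (ge_inf _); last by exists x.
exists 0 => _ [y _ <-]; apply: sumr_ge0 => j _; apply: sumr_ge0 => i _; exact: sqr_ge0.
Qed.

Lemma sq_bound (R : realType) (z w : R) : 0 <= w -> z ^+ 2 <= w ^+ 2 -> - w <= z <= w.
Proof. move=> w0 h; apply/andP; split; nra. Qed.

Lemma region (R : realType) d k b (i0 : 'I_d) (t eps : R) (x : 'rV[R]_d) :
  0 < t -> 0 < eps -> (0 < k)%N -> (0 < b)%N -> 4 * eps * b%:R <= k%:R ->
  approx_mean eps (inst k b i0 t) x ->
  k%:R * t <= 2 * (k + b)%:R * x ord0 i0 <= 3 * (k%:R * t).
Proof.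
move=> t0 ep0 k0 b0 hkb ham.
set y := x ord0 i0.
set a : R := k%:R. set c : R := b%:R.
have a0 : 0 < a by rewrite ltr0n.
have c0 : 0 < c by rewrite ltr0n.
set s : R := (k + b)%:R.
have sE : s = a + c by rewrite /s natrD.
set mu := a * t / s.
have s0 : 0 < s by rewrite sE; lra.
have smu : s * mu = a * t by rewrite /mu mulrCA mulfV ?mulr1 // gt_eqF.
have h1 := cost_lb k b i0 t x.
have h2 := Opt_le (inst k b i0 t) (mu *: e0 R i0).
rewrite cost_mu in h2.
rewrite /approx_mean in ham.
have h3 : a * (t - y) ^+ 2 + c * (0 - y) ^+ 2 <= (1 + eps) * (a * (t - mu) ^+ 2 + c * (0 - mu) ^+ 2).
  apply: le_trans h1 _; apply: le_trans ham _; apply: ler_wpM2l => //; lra.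
have h4 : s * (a * (t - mu) ^+ 2 + c * (0 - mu) ^+ 2) = a * c * t ^+ 2.
  rewrite sE in smu *; nra.
have h5 : s * (a * (t - y) ^+ 2 + c * (0 - y) ^+ 2) = (s * y - a * t) ^+ 2 + a * c * t ^+ 2.
  rewrite sE; ring.
have h6 : (s * y - a * t) ^+ 2 <= eps * (a * c * t ^+ 2).
  have := ler_wpM2l (ltW s0) h3.
  rewrite h5 (mulrCA s (1 + eps)) h4; lra.
have h7 : (s * y - a * t) ^+ 2 <= (a * t / 2) ^+ 2.
  apply: le_trans h6 _.
  have q0 : 0 <= a * t ^+ 2 / 4 by apply: divr_ge0 => //; apply: mulr_ge0; [lra|exact: sqr_ge0].
  have := ler_wpM2r q0 hkb.
  have -> : 4 * eps * b%:R * (a * t ^+ 2 / 4) = eps * (a * c * t ^+ 2) by rewrite /c; field.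
  have -> : k%:R * (a * t ^+ 2 / 4) = (a * t / 2) ^+ 2 by rewrite /a; field.
  done.
have w0 : 0 < a * t / 2 by apply: divr_gt0 => //; apply: mulr_gt0.
have := sq_bound (ltW w0) h7.
case/andP => h8 h9.
apply/andP; split; lra.
Qed.

Lemma fine_bounds (R : realType) dO (Omega : measurableType dO) (P : probability Omega R) (X : set Omega) :
  measurable X -> 0 <= fine (P X) <= 1.
Proof.
move=> mX; apply/andP; split; first exact: fine_ge0.
rewrite -lee_fin fineK ?fin_num_measure //; exact: probability_le1.
Qed.

Lemma step_A (R : realType) (eps delta : R) d (i0 : 'I_d) m dO (Omega : measurableType dO)
  (P : probability Omega R) (alg : Omega -> ('I_m -> 'rV[R]_d) -> 'rV[R]_d) (k b : nat) (t : R) :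
  (0 < b)%N ->
  (forall s : {ffun 'I_m -> 'I_(k+b)}, measurable (success_event alg eps (inst k b i0 t) s)) ->
  1 - delta <= success_prob P alg eps (inst k b i0 t) ->
  measurable [set w | approx_mean eps (inst k b i0 t) (alg w (fun _ => 0))] /\
  (1 - fine (P [set w | approx_mean eps (inst k b i0 t) (alg w (fun _ => 0))])) * (b%:R ^+ m)
     <= delta * ((k + b)%:R ^+ m).
Proof.
move=> b0 hm hp.
set F := [set w | approx_mean eps (inst k b i0 t) (alg w (fun _ => 0))].
set S0 := [set s : {ffun 'I_m -> 'I_(k+b)} | [forall i, (k <= s i)%N]]%SET.
have hS0 : forall s, s \in S0 -> success_event alg eps (inst k b i0 t) s = F.
  move=> s; rewrite inE => /forallP hs; rewrite /success_event /F.
  congr [set w | approx_mean _ _ (alg w _)].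
  apply: funext => j; apply: funext => i; rewrite /inst ltnNge hs /=; exact: scale0r.
set s0 : {ffun 'I_m -> 'I_(k+b)} := [ffun _ => rshift k (Ordinal b0)].
have s0S : s0 \in S0 by rewrite inE; apply/forallP => i; rewrite ffunE /= leq_addr.
have mF : measurable F by rewrite -(hS0 _ s0S).
split => //.
set fF := fine (P F).
set f := fun s => fine (P (success_event alg eps (inst k b i0 t) s)).
have fb : forall s, 0 <= f s <= 1 by move=> s; exact: fine_bounds.
have fFb : 0 <= fF <= 1 by exact: fine_bounds.
have card0 : #|{ffun 'I_m -> 'I_(k+b)}| = ((k + b) ^ m)%N by rewrite card_ffun !card_ord.
have n0 : 0 < (k + b)%:R ^+ m :> R by apply: exprn_gt0; rewrite ltr0n addn_gt0 b0 orbT.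
have h1 : (1 - delta) * (k + b)%:R ^+ m <= \sum_s f s.
  have := ler_wpM2r (ltW n0) hp; rewrite /success_prob.
  by rewrite [X in _ <= X]mulrC mulrA mulfV ?gt_eqF // mul1r.
have h2 : \sum_s (1 - f s) <= delta * (k + b)%:R ^+ m.
  rewrite sumrB sumr_const.
  have -> : #|[pred x : {ffun 'I_m -> 'I_(k+b)} | true]| = ((k + b) ^ m)%N by rewrite -card0.
  rewrite natrX; lra.
have card1 : (b ^ m <= #|S0|)%N.
  set phi := fun g : {ffun 'I_m -> 'I_b} => [ffun i => rshift k (g i)] : {ffun 'I_m -> 'I_(k+b)}.
  have phi_inj : injective phi.
    move=> g1 g2 /ffunP h; apply/ffunP => i; have := h i; rewrite !ffunE; exact: rshift_inj.
  have <- : #|[set phi g | g in [set: {ffun 'I_m -> 'I_b}]]%SET| = (b ^ m)%N.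
    by rewrite card_imset // cardsT card_ffun !card_ord.
  apply: subset_leq_card; apply/fintype.subsetP => s /imsetP [g _ ->].
  rewrite inE; apply/forallP => i; rewrite ffunE /= leq_addr.
  done.
have h3 : (1 - fF) *+ #|S0| <= \sum_s (1 - f s).
  rewrite -sumr_const big_mkcond /=; apply: ler_sum => s _.
  case: ifP => sS; first by rewrite /f hS0.
  by case/andP: (fb s) => _ ?; lra.
apply: le_trans h2.
apply: le_trans h3.
rewrite -[_ *+ #|S0|]mulr_natr.
apply: ler_wpM2l; first by case/andP: fFb => _ ?; lra.
by rewrite -natrX ler_nat.
Qed.

Lemma core (R : realType) (eps delta : R) d (i0 : 'I_d) m dO (Omega : measurableType dO)
  (P : probability Omega R) (alg : Omega -> ('I_m -> 'rV[R]_d) -> 'rV[R]_d) (k b : nat) :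
  0 < eps -> (0 < k)%N -> (0 < b)%N -> 4 * eps * b%:R <= k%:R ->
  (forall A : 'I_(k+b) -> 'rV[R]_d,
     (forall s, measurable (success_event alg eps A s)) /\ 1 - delta <= success_prob P alg eps A) ->
  (b%:R / (k+b)%:R) ^+ m <= delta.
Proof.
move=> ep0 k0 b0 hkb H.
pose T := fun j : nat => ((4 ^ j)%N)%:R : R.
pose F := fun j : nat => [set w | approx_mean eps (inst k b i0 (T j)) (alg w (fun _ => 0))].
have hA : forall j, measurable (F j) /\
    (1 - fine (P (F j))) * (b%:R ^+ m) <= delta * ((k+b)%:R ^+ m).
  move=> j; case: (H (inst k b i0 (T j))) => hm hp; exact: step_A.
have Tpos : forall j, 0 < T j by move=> j; rewrite ltr0n expn_gt0.
have ka : 0 < k%:R :> R by rewrite ltr0n.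
have key : forall i j w, (i < j)%N -> F i w -> F j w -> False.
  move=> i j w ij Fi Fj.
  have := region (Tpos i) ep0 k0 b0 hkb Fi.
  have := region (Tpos j) ep0 k0 b0 hkb Fj.
  have h4 : 4 * T i <= T j by rewrite /T -natrM ler_nat -expnS leq_pexp2l.
  have h5 : k%:R * (4 * T i) <= k%:R * T j by apply: ler_wpM2l => //; exact: ltW.
  have h6 : 0 < k%:R * T i by apply: mulr_gt0.
  case/andP => a1 a2; case/andP => b1 b2; lra.
have triv : trivIset setT F.
  move=> i j _ _ [w [Fi Fj]]; case: (ltngtP i j) => // [ij|ji].
    by exfalso; exact: key ij Fi Fj.
  by exfalso; exact: key ji Fj Fi.
rewrite leNgt; apply/negP => hq.
set q := (b%:R / (k+b)%:R) ^+ m in hq.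
have bm0 : 0 < b%:R ^+ m :> R by apply: exprn_gt0; rewrite ltr0n.
have nm0 : 0 < (k + b)%:R ^+ m :> R by apply: exprn_gt0; rewrite ltr0n addn_gt0 b0 orbT.
have qE : q = b%:R ^+ m / (k + b)%:R ^+ m by rewrite /q expr_div_n.
have q0 : 0 < q by rewrite qE divr_gt0.
pose g := 1 - delta / q.
have g0 : 0 < g by rewrite /g subr_gt0 ltr_pdivrMr // mul1r.
have fg : forall j, g <= fine (P (F j)).
  move=> j; have h := (hA j).2.
  have e1 : delta / q = delta * (k + b)%:R ^+ m / b%:R ^+ m.
    by rewrite qE invf_div mulrA.
  have h' : 1 - fine (P (F j)) <= delta / q by rewrite e1 ler_pdivlMr.
  rewrite /g; lra.
have sumK : forall K : nat, K%:R * g <= 1.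
  move=> K.
  have mU : measurable (\big[setU/set0]_(j < K) F j).
    by apply: bigsetU_measurable => j _; exact: (hA j).1.
  have := @measure_semi_additive _ _ _ P F K (fun j => (hA j).1) triv mU.
  have hPF : forall j, P (F j) = (fine (P (F j)))%:E.
    by move=> j; rewrite fineK // fin_num_measure //; exact: (hA j).1.
  have hS : (\sum_(j < K) P (F j) = (\sum_(j < K) fine (P (F j)))%:E)%E.
    by rewrite -sumEFin; apply: eq_bigr => j _; exact: hPF j.
  rewrite hS => hU.
  have := probability_le1 P mU; rewrite hU lee_fin.
  apply: le_trans.
  rewrite mulr_natl -{1}(card_ord K) -sumr_const.
  by apply: ler_sum => j _; exact: fg.
have := sumK (Num.Def.trunc (g^-1)).+1.
have := truncnS_gt (g^-1).
set N := _%:R => hN h.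
have : 1 < N * g.
  by rewrite -ltr_pdivrMr // mul1r -[g^-1]mul1r in hN *.
lra.
Qed.

Theorem theorem5p1 (R : realType) :
  exists c : R, 0 < c /\
  forall (eps delta : R), 0 < eps < 1 -> 0 < delta < 1 ->
  forall (d : nat), (0 < d)%N ->
  forall (m : nat) (dO : measure_display) (Omega : measurableType dO)
         (P : probability Omega R)
         (alg : Omega -> ('I_m -> 'rV[R]_d) -> 'rV[R]_d),
    (forall (n : nat) (A : 'I_n -> 'rV[R]_d), (0 < n)%N ->
       (forall s : {ffun 'I_m -> 'I_n}, measurable (success_event alg eps A s)) /\
       1 - delta <= success_prob P alg eps A) ->
    c * eps^-1 * ln (delta^-1) <= m%:R.
Proof.
exists (1 / 16); split; first by lra.
move=> eps delta /andP[ep0 ep1] /andP[dl0 dl1] d d0 m dO Omega P alg H.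
pose i0 : 'I_d := Ordinal d0.
have [k [b [k0 [b0 [h1 h2]]]]] : exists k b, [/\ (0 < k)%N, (0 < b)%N,
    4 * eps * b%:R <= k%:R & k%:R <= 16 * eps * b%:R].
  case: (lerP (1 / 4) eps) => he4.
    by exists 4%N, 1%N; split => //; rewrite ?mulr1; lra.
  set x := (4 * eps)^-1.
  have x4 : 4 * eps * x = 1 by rewrite /x mulfV // gt_eqF //; lra.
  have x0 : 0 <= x by rewrite /x invr_ge0; lra.
  have x1 : 1 <= x.
    rewrite /x -[1]invr1 lef_pV2 ?posrE; lra.
  exists 1%N, (Num.Def.trunc x); split => //.
  - by rewrite truncn_gt0.
  - have := truncn_itv x0; case/andP => t1 t2.
    have : 4 * eps * (Num.Def.trunc x)%:R <= 4 * eps * x by apply: ler_wpM2l => //; lra.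
    lra.
  - have := truncn_itv x0; case/andP => t1 t2.
    have t3 : 1 <= (Num.Def.trunc x)%:R :> R by rewrite ler1n truncn_gt0.
    rewrite -natr1 in t2.
    have : 4 * eps * x < 4 * eps * ((Num.Def.trunc x)%:R + 1) by rewrite ltr_pM2l //; lra.
    nra.
have hn : (0 < k + b)%N by rewrite addn_gt0 k0.
have hq := core (P:=P) (alg:=alg) i0 ep0 k0 b0 h1 (fun A => H (k + b)%N A hn).
have bR : 0 < b%:R :> R by rewrite ltr0n.
have nR : 0 < (k + b)%:R :> R by rewrite ltr0n.
have q0 : 0 < (b%:R / (k + b)%:R) ^+ m :> R by rewrite exprn_gt0 // divr_gt0.
have hi : delta^-1 <= ((k + b)%:R / b%:R) ^+ m.
  by rewrite -invf_div exprVn lef_pV2 ?posrE.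
have he : (k + b)%:R / b%:R <= expR (k%:R / b%:R) :> R.
  apply: le_trans (expR_ge1Dx _); rewrite natrD mulrDl divff ?gt_eqF //; lra.
have hi2 : delta^-1 <= expR (m%:R * (k%:R / b%:R)).
  apply: le_trans hi _; rewrite expRM_natl; apply: lerXn2r => //; rewrite ?nnegrE ?expR_ge0 //.
have hL : ln (delta^-1) <= m%:R * (k%:R / b%:R).
  by rewrite -[X in _ <= X]expRK ler_ln ?posrE ?expR_gt0 ?invr_gt0.
have hkb : k%:R / b%:R <= 16 * eps by rewrite ler_pdivrMr.
have L0 : 0 <= ln (delta^-1) by apply: ln_ge0; rewrite invf_ge1 //; lra.
have hL2 : ln (delta^-1) <= m%:R * (16 * eps).
  by apply: le_trans hL _; apply: ler_wpM2l.
have hc : 0 <= 1 / 16 * eps^-1 by apply: mulr_ge0; [lra | rewrite invr_ge0; lra].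
apply: le_trans (ler_wpM2l hc hL2) _.
rewrite le_eqVlt; apply/orP; left; apply/eqP; field; lra.
Qed.
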